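(* Let $\mathcal K$ be a 2-category which admits Eilenberg–Moore constructions for monads and in which idempotent 2-cells split. Let $(V,\psi):(t,\mu,\eta)\to(t',\mu',\eta')$ be a 1-cell in $\mathrm{EM}^w(\mathcal K)$ and let $Vv\overset{\pi}{\Rightarrow}\widetilde V\overset{\iota}{\Rightarrow}Vv$ be a chosen splitting of the idempotent 2-cell $Vv\epsilon\ast\psi v\ast\eta'Vv$ (so $\widetilde V:J(t)\to k'$, $\pi\ast\iota=\widetilde V$, $\iota\ast\pi=Vv\epsilon\ast\psi v\ast\eta'Vv$). Put $\widetilde\psi:=\pi\ast Vv\epsilon\ast\psi v\ast t'\iota:t'\widetilde V\Rightarrow\widetilde V$. Then $(\widetilde V,\widetilde\psi)$ is a 1-cell $IJ(t)\to t'$ in $\mathrm{EM}(\mathcal K)$, i.e. $\widetilde\psi\ast t'\widetilde\psi=\widetilde\psi\ast\mu'\widetilde V$ and $\widetilde\psi\ast\eta'\widetilde V=\widetilde V$.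
   Context: Conventions in a 2-category $\mathcal K$: horizontal composition and whiskering by juxtaposition in the order of functor composition; identity 1-cell of $k$ written $k$, identity 2-cell of $V$ written $V$; vertical composition $\ast$ with $\alpha\ast\beta$ meaning $\beta$ then $\alpha$. A monad $(t,\mu,\eta)$ on $k$: $t:k\to k$, $\mu:tt\Rightarrow t$, $\eta:k\Rightarrow t$, associative and unital. A 1-cell $(t,\mu,\eta)\to(t',\mu',\eta')$ in $\mathrm{EM}^w(\mathcal K)$ ($t$ on $k$, $t'$ on $k'$) is a pair $(V,\psi)$, $V:k\to k'$, $\psi:t'V\Rightarrow Vt$, with $V\mu\ast\psi t\ast t'\psi=\psi\ast\mu'V$. In the Lack–Street 2-category $\mathrm{EM}(\mathcal K)$, a 1-cell from the identity monad $I(l)=(l,l,l)$ on a 0-cell $l$ to $(t',\mu',\eta')$ is a pair $(A,\alpha)$, $A:l\to k'$, $\alpha:t'A\Rightarrow A$ with $\alpha\ast t'\alpha=\alpha\ast\mu'A$ and $\alpha\ast\eta'A=A$. $\mathcal K$ admits Eilenberg–Moore constructions for monads: the inclusion 2-functor $I:\mathcal K\to\mathrm{EM}(\mathcal K)$ has a right 2-adjoint $J$; each monad $(t,\mu,\eta)$ on $k$ determines an adjunction $f\dashv v$, $f:k\to J(t)$, $v:J(t)\to k$, unit $\eta:k\Rightarrow vf$, counit $\epsilon:fv\Rightarrow J(t)$, with $t=vf$, $\mu=v\epsilon f$; for $t'$ the data are $f',v',\eta',\epsilon'$. Idempotent 2-cells split: for every $e:X\Rightarrow X$ with $e\ast e=e$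 there are $\widehat X$, $\iota:\widehat X\Rightarrow X$, $\pi:X\Rightarrow\widehat X$ with $\pi\ast\iota=\widehat X$ and $\iota\ast\pi=e$. The 2-cell $Vv\epsilon\ast\psi v\ast\eta'Vv$ is idempotent. *)

(* Defs.v *)
Definition castC {A : Type} (C : A -> A -> Type) {x x' y y' : A}
  (e1 : x = x') (e2 : y = y') (c : C x y) : C x' y' :=
  match e1 in _ = x0 return C x0 y' with
  | eq_refl => match e2 in _ = y0 return C x y0 with eq_refl => c end
  end.

(* A strict 2-category (a Cat-enriched category).
   comp1 g f  is  "g after f"  (functor-composition order);
   vcomp b a  is  "a then b"   (written  b * a  in the paper);
   hcomp b a  is the horizontal composite  b a . *)
Record TwoCat : Type := {
  ob : Type;
  hom : ob -> ob -> Type;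
  cell : forall a b : ob, hom a b -> hom a b -> Type;
  id1 : forall a : ob, hom a a;
  comp1 : forall a b c : ob, hom b c -> hom a b -> hom a c;
  id2 : forall (a b : ob) (f : hom a b), cell a b f f;
  vcomp : forall (a b : ob) (f g h : hom a b),
      cell a b g h -> cell a b f g -> cell a b f h;
  hcomp : forall (a b c : ob) (g g' : hom b c) (f f' : hom a b),
      cell b c g g' -> cell a b f f' ->
      cell a c (comp1 a b c g f) (comp1 a b c g' f');
  comp1A : forall (a b c d : ob) (h : hom c d) (g : hom b c) (f : hom a b),
      comp1 a c d h (comp1 a b c g f) = comp1 a b d (comp1 b c d h g) f;
  comp1_id1l : forall (a b : ob) (f : hom a b), comp1 a b b (id1 b) f = f;
  comp1_id1r : forall (a b : ob) (f : hom a b), comp1 a a b f (id1 a) = f;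
  vcompA : forall (a b : ob) (f g h i : hom a b)
      (z : cell a b h i) (y : cell a b g h) (x : cell a b f g),
      vcomp a b f h i z (vcomp a b f g h y x)
      = vcomp a b f g i (vcomp a b g h i z y) x;
  vcomp_id2l : forall (a b : ob) (f g : hom a b) (x : cell a b f g),
      vcomp a b f g g (id2 a b g) x = x;
  vcomp_id2r : forall (a b : ob) (f g : hom a b) (x : cell a b f g),
      vcomp a b f f g x (id2 a b f) = x;
  hcomp_id2 : forall (a b c : ob) (g : hom b c) (f : hom a b),
      hcomp a b c g g f f (id2 b c g) (id2 a b f) = id2 a c (comp1 a b c g f);
  interchange : forall (a b c : ob) (g g' g'' : hom b c) (f f' f'' : hom a b)
      (y' : cell b c g' g'') (y : cell b c g g')
      (x' : cell a b f' f'') (x : cell a b f f'),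
      hcomp a b c g g'' f f'' (vcomp b c g g' g'' y' y) (vcomp a b f f' f'' x' x)
      = vcomp a c _ _ _ (hcomp a b c g' g'' f' f'' y' x') (hcomp a b c g g' f f' y x);
  hcompA : forall (a b c d : ob) (h h' : hom c d) (g g' : hom b c) (f f' : hom a b)
      (z : cell c d h h') (y : cell b c g g') (x : cell a b f f'),
      hcomp a c d h h' (comp1 a b c g f) (comp1 a b c g' f') z
            (hcomp a b c g g' f f' y x)
      = castC (cell a d) (eq_sym (comp1A a b c d h g f)) (eq_sym (comp1A a b c d h' g' f'))
          (hcomp a b d (comp1 b c d h g) (comp1 b c d h' g') f f'
                 (hcomp b c d h h' g g' z y) x);
  hcomp_id1l : forall (a b : ob) (f f' : hom a b) (x : cell a b f f'),
      hcomp a b b (id1 b) (id1 b) f f' (id2 b b (id1 b)) x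
      = castC (cell a b) (eq_sym (comp1_id1l a b f)) (eq_sym (comp1_id1l a b f')) x;
  hcomp_id1r : forall (a b : ob) (f f' : hom a b) (x : cell a b f f'),
      hcomp a a b f f' (id1 a) (id1 a) x (id2 a a (id1 a))
      = castC (cell a b) (eq_sym (comp1_id1r a b f)) (eq_sym (comp1_id1r a b f')) x
}.

Arguments hom {K} a b : rename.
Arguments cell {K a b} f g : rename.
Arguments id1 {K} a : rename.
Arguments comp1 {K a b c} g f : rename.
Arguments id2 {K a b} f : rename.
Arguments vcomp {K a b f g h} y x : rename.
Arguments hcomp {K a b c g g' f f'} y x : rename.
Arguments comp1A {K a b c d} h g f : rename.
Arguments comp1_id1l {K a b} f : rename.
Arguments comp1_id1r {K a b} f : rename.

Set Implicit Arguments.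

Section TwoCatDefs.
Context {K : TwoCat}.

Definition cast2 {a b : ob K} {f f' g g' : hom a b}
  (e1 : f = f') (e2 : g = g') (x : cell f g) : cell f' g' :=
  castC (@cell K a b) e1 e2 x.

Definition whL {a b c : ob K} (h : hom b c) {f g : hom a b} (x : cell f g)
  : cell (comp1 h f) (comp1 h g) := hcomp (id2 h) x.
Definition whR {a b c : ob K} {f g : hom b c} (x : cell f g) (h : hom a b)
  : cell (comp1 f h) (comp1 g h) := hcomp x (id2 h).

Definition is_monad {k : ob K} (t : hom k k)
  (mu : cell (comp1 t t) t) (eta : cell (id1 k) t) : Prop :=
  vcomp mu (whL t mu) = cast2 (eq_sym (comp1A t t t)) eq_refl (vcomp mu (whR mu t))
  /\ vcomp mu (whL t eta) = cast2 (eq_sym (comp1_id1r t)) eq_refl (id2 t)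
  /\ vcomp mu (whR eta t) = cast2 (eq_sym (comp1_id1l t)) eq_refl (id2 t).

Definition is_EMw_cell {k k' : ob K} {t : hom k k} {t' : hom k' k'}
  (mu : cell (comp1 t t) t) (mu' : cell (comp1 t' t') t')
  (V : hom k k') (psi : cell (comp1 t' V) (comp1 V t)) : Prop :=
  vcomp (whL V mu)
    (vcomp (cast2 (eq_sym (comp1A t' V t)) (eq_sym (comp1A V t t)) (whR psi t))
           (whL t' psi))
  = cast2 (eq_sym (comp1A t' t' V)) eq_refl (vcomp psi (whR mu' V)).

Definition is_EM_cell_from_id {l k' : ob K} {t' : hom k' k'}
  (mu' : cell (comp1 t' t') t') (eta' : cell (id1 k') t')
  (A : hom l k') (alpha : cell (comp1 t' A) A) : Prop :=
  vcomp alpha (whL t' alpha)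
    = cast2 (eq_sym (comp1A t' t' A)) eq_refl (vcomp alpha (whR mu' A))
  /\ vcomp alpha (whR eta' A) = cast2 (eq_sym (comp1_id1l A)) eq_refl (id2 A).

Lemma EM_eq_tt {k J : ob K} {t : hom k k} {f : hom k J} {v : hom J k} :
  t = comp1 v f -> comp1 t t = comp1 v (comp1 (comp1 f v) f).
Proof.
  intros e; subst t. rewrite (comp1A v (comp1 f v) f), (comp1A v f v).
  apply comp1A.
Qed.

Lemma EM_eq_t {k J : ob K} {t : hom k k} {f : hom k J} {v : hom J k} :
  t = comp1 v f -> t = comp1 v (comp1 (id1 J) f).
Proof. intros e; subst t. now rewrite comp1_id1l. Qed.

Lemma EM_eq_lam {k J l : ob K} {t : hom k k} {f : hom k J} {v : hom J k}
  (B : hom l J) :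
  t = comp1 v f -> comp1 (comp1 v (comp1 f v)) B = comp1 t (comp1 v B).
Proof.
  intros e; subst t. rewrite (comp1A v f v), (comp1A (comp1 v f) v B).
  reflexivity.
Qed.

Lemma EM_eq_lam' {J k l : ob K} {v : hom J k} (B : hom l J) :
  comp1 (comp1 v (id1 J)) B = comp1 v B.
Proof. now rewrite comp1_id1r. Qed.

Definition EM_lam {k J l : ob K} {t : hom k k} {f : hom k J} {v : hom J k}
  (eps : cell (comp1 f v) (id1 J)) (e : t = comp1 v f) (B : hom l J)
  : cell (comp1 t (comp1 v B)) (comp1 v B) :=
  cast2 (EM_eq_lam B e) (EM_eq_lam' B) (whR (whL v eps) B).

(* f -| v with unit eta, counit eps, t = v f, mu = v eps f, and J is the
   Eilenberg-Moore object of t: composing with the counit (v, v eps) of the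
   2-adjunction I -| J is an isomorphism between K(l, J) and the category of
   EM(K)-1-cells I(l) -> t (t-algebras on l) with algebra morphisms. *)
Definition is_EM_construction {k J : ob K} {t : hom k k}
  (mu : cell (comp1 t t) t) (eta : cell (id1 k) t)
  (f : hom k J) (v : hom J k) (eps : cell (comp1 f v) (id1 J))
  (e : t = comp1 v f) : Prop :=
  let etaa : cell (id1 k) (comp1 v f) := cast2 eq_refl e eta in
  mu = cast2 (eq_sym (EM_eq_tt e)) (eq_sym (EM_eq_t e)) (whL v (whR eps f))
  /\ vcomp (cast2 (eq_sym (comp1A f v f)) (comp1_id1l f) (whR eps f)) (whL f etaa)
     = cast2 (eq_sym (comp1_id1r f)) eq_refl (id2 f)
  /\ vcomp (cast2 (comp1A v f v) (comp1_id1r v) (whL v eps)) (whR etaa v)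
     = cast2 (eq_sym (comp1_id1l v)) eq_refl (id2 v)
  /\ (forall (l : ob K) (A : hom l k) (alpha : cell (comp1 t A) A),
        is_EM_cell_from_id mu eta A alpha ->
        exists! B : hom l J, exists h : comp1 v B = A,
          castC (@cell K l k) (f_equal (comp1 t) h) h (EM_lam eps e B) = alpha)
  /\ (forall (l : ob K) (B1 B2 : hom l J) (th : cell (comp1 v B1) (comp1 v B2)),
        vcomp th (EM_lam eps e B1) = vcomp (EM_lam eps e B2) (whL t th) ->
        exists! s : cell B1 B2, whL v s = th).

Definition admits_EM : Prop :=
  forall (k : ob K) (t : hom k k) (mu : cell (comp1 t t) t) (eta : cell (id1 k) t),
    is_monad t mu eta ->
    exists (J : ob K) (f : hom k J) (v : hom J k) (eps : cell (comp1 f v) (id1 J))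
           (e : t = comp1 v f), is_EM_construction mu eta f v eps e.

Definition idempotents_split : Prop :=
  forall (a b : ob K) (X : hom a b) (x : cell X X), vcomp x x = x ->
    exists (Xh : hom a b) (iota : cell Xh X) (pi : cell X Xh),
      vcomp pi iota = id2 Xh /\ vcomp iota pi = x.

Lemma eq_psiv {k k' J : ob K} {t : hom k k} {f : hom k J} {v : hom J k}
  (V : hom k k') :
  t = comp1 v f -> comp1 (comp1 V t) v = comp1 (comp1 V v) (comp1 f v).
Proof.
  intros e; subst t. rewrite (comp1A V v f).
  symmetry; apply comp1A.
Qed.

Definition cell_etaVv {k k' J : ob K} {t' : hom k' k'} (eta' : cell (id1 k') t')
  (V : hom k k') (v : hom J k) : cell (comp1 V v) (comp1 t' (comp1 V v)) :=
  cast2 (comp1_id1l (comp1 V v)) eq_refl (whR eta' (comp1 V v)).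

Definition cell_psiv {k k' J : ob K} {t : hom k k} {t' : hom k' k'}
  {f : hom k J} {v : hom J k} (e : t = comp1 v f)
  (V : hom k k') (psi : cell (comp1 t' V) (comp1 V t))
  : cell (comp1 t' (comp1 V v)) (comp1 (comp1 V v) (comp1 f v)) :=
  cast2 (eq_sym (comp1A t' V v)) (eq_psiv V e) (whR psi v).

Definition cell_Vveps {k k' J : ob K} {f : hom k J} {v : hom J k}
  (V : hom k k') (eps : cell (comp1 f v) (id1 J))
  : cell (comp1 (comp1 V v) (comp1 f v)) (comp1 V v) :=
  cast2 eq_refl (comp1_id1r (comp1 V v)) (whL (comp1 V v) eps).

Definition idem_cell {k k' J : ob K} {t : hom k k} {t' : hom k' k'}
  {f : hom k J} {v : hom J k} (e : t = comp1 v f)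
  (eps : cell (comp1 f v) (id1 J)) (eta' : cell (id1 k') t')
  (V : hom k k') (psi : cell (comp1 t' V) (comp1 V t)) : cell (comp1 V v) (comp1 V v) :=
  vcomp (cell_Vveps V eps) (vcomp (cell_psiv e V psi) (cell_etaVv eta' V v)).

Definition psi_tilde {k k' J : ob K} {t : hom k k} {t' : hom k' k'}
  {f : hom k J} {v : hom J k} (e : t = comp1 v f)
  (eps : cell (comp1 f v) (id1 J))
  (V : hom k k') (psi : cell (comp1 t' V) (comp1 V t))
  {Vt : hom J k'} (pi : cell (comp1 V v) Vt) (iota : cell Vt (comp1 V v))
  : cell (comp1 t' Vt) Vt :=
  vcomp pi (vcomp (cell_Vveps V eps) (vcomp (cell_psiv e V psi) (whL t' iota))).

End TwoCatDefs.

(* Main.v *)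
Require Import Defs.
From Stdlib Require Import Eqdep ClassicalEpsilon.

Section P.
Context {K : TwoCat}.

Definition Pk (a b : ob K) := {p : hom a b * hom a b & cell (fst p) (snd p)}.
Definition pk {a b : ob K} {f g : hom a b} (x : cell f g) : Pk a b :=
  existT (fun p : hom a b * hom a b => cell (fst p) (snd p)) (f,g) x.
Definition src {a b} (X : Pk a b) : hom a b := fst (projT1 X).
Definition tgt {a b} (X : Pk a b) : hom a b := snd (projT1 X).
Definition hP {a b c : ob K} (X : Pk b c) (Y : Pk a b) : Pk a c :=
  pk (hcomp (projT2 X) (projT2 Y)).
Definition iP {a b : ob K} (f : hom a b) : Pk a b := pk (id2 f).
Definition vP {a b : ob K} (X Y : Pk a b) : Pk a b :=
  match excluded_middle_informative (tgt Y = src X) with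
  | left h => pk (vcomp (projT2 X) (castC (@cell K a b) eq_refl h (projT2 Y)))
  | right _ => X end.

Lemma pk_inj {a b : ob K} {f g : hom a b} (x y : cell f g) : pk x = pk y -> x = y.
Proof. intro H. exact (inj_pair2 _ _ _ _ _ H). Qed.

Lemma pk_cast {a b : ob K} {f f' g g' : hom a b} (e1 : f = f') (e2 : g = g') (x : cell f g) :
  pk (castC (@cell K a b) e1 e2 x) = pk x.
Proof. destruct e1, e2; reflexivity. Qed.

Lemma pk_h {a b c : ob K} {g g' : hom b c} {f f' : hom a b} (y : cell g g') (x : cell f f') :
  pk (hcomp y x) = hP (pk y) (pk x).
Proof. reflexivity. Qed.

Lemma pk_id {a b : ob K} (f : hom a b) : pk (id2 f) = iP f.
Proof. reflexivity. Qed.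

Lemma pk_v {a b : ob K} {f g h : hom a b} (y : cell g h) (x : cell f g) :
  pk (vcomp y x) = vP (pk y) (pk x).
Proof.
  unfold vP. destruct (excluded_middle_informative _) as [e|n].
  - cbn in *. rewrite (UIP_refl _ _ e). reflexivity.
  - exfalso; apply n; reflexivity.
Qed.

Lemma src_pk {a b : ob K} {f g : hom a b} (x : cell f g) : src (pk x) = f.
Proof. reflexivity. Qed.
Lemma tgt_pk {a b : ob K} {f g : hom a b} (x : cell f g) : tgt (pk x) = g.
Proof. reflexivity. Qed.
Lemma src_iP {a b : ob K} (f : hom a b) : src (iP f) = f.
Proof. reflexivity. Qed.
Lemma tgt_iP {a b : ob K} (f : hom a b) : tgt (iP f) = f.
Proof. reflexivity. Qed.
Lemma src_hP {a b c : ob K} (X : Pk b c) (Y : Pk a b) : src (hP X Y) = comp1 (src X) (src Y).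
Proof. reflexivity. Qed.
Lemma tgt_hP {a b c : ob K} (X : Pk b c) (Y : Pk a b) : tgt (hP X Y) = comp1 (tgt X) (tgt Y).
Proof. reflexivity. Qed.

Ltac pd X := let f := fresh "f" in let g := fresh "g" in let x := fresh "x" in
  destruct X as [[f g] x]; cbn [src tgt projT1 fst snd] in *.

Lemma tgt_vP {a b : ob K} (X Y : Pk a b) : tgt Y = src X -> tgt (vP X Y) = tgt X.
Proof. pd X; pd Y; intro; subst. change (tgt (vP (pk x) (pk x0)) = g). rewrite <- pk_v; reflexivity. Qed.
Lemma src_vP {a b : ob K} (X Y : Pk a b) : tgt Y = src X -> src (vP X Y) = src Y.
Proof. pd X; pd Y; intro; subst. change (src (vP (pk x) (pk x0)) = f0). rewrite <- pk_v; reflexivity. Qed.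

Lemma vPA {a b : ob K} (X Y Z : Pk a b) : tgt X = src Y -> tgt Y = src Z ->
  vP (vP Z Y) X = vP Z (vP Y X).
Proof. pd X; pd Y; pd Z; intros; subst.
  change (vP (vP (pk x1) (pk x0)) (pk x) = vP (pk x1) (vP (pk x0) (pk x))).
  rewrite <- !pk_v, vcompA; reflexivity. Qed.

Lemma hPA {a b c d : ob K} (Z : Pk c d) (Y : Pk b c) (X : Pk a b) :
  hP Z (hP Y X) = hP (hP Z Y) X.
Proof. pd X; pd Y; pd Z.
  change (pk (hcomp x1 (hcomp x0 x)) = pk (hcomp (hcomp x1 x0) x)).
  rewrite hcompA. apply pk_cast. Qed.

Lemma hP_id2 {a b c : ob K} (g : hom b c) (f : hom a b) : hP (iP g) (iP f) = iP (comp1 g f).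
Proof. unfold iP, hP. cbn. rewrite hcomp_id2. reflexivity. Qed.

Lemma hP_id1l {a b : ob K} (X : Pk a b) : hP (iP (id1 b)) X = X.
Proof. pd X. change (pk (hcomp (id2 (id1 b)) x) = pk x). rewrite hcomp_id1l. apply pk_cast. Qed.
Lemma hP_id1r {a b : ob K} (X : Pk a b) : hP X (iP (id1 a)) = X.
Proof. pd X. change (pk (hcomp x (id2 (id1 a))) = pk x). rewrite hcomp_id1r. apply pk_cast. Qed.

Lemma interP {a b c : ob K} (Y Y' : Pk b c) (X X' : Pk a b) :
  tgt Y = src Y' -> tgt X = src X' ->
  hP (vP Y' Y) (vP X' X) = vP (hP Y' X') (hP Y X).
Proof. pd X; pd Y; pd X'; pd Y'; intros; subst.
  change (hP (vP (pk x2) (pk x0)) (vP (pk x1) (pk x)) = vP (hP (pk x2) (pk x1)) (hP (pk x0) (pk x))).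
  rewrite <- !pk_v, <- !pk_h, <- pk_v. rewrite interchange. reflexivity. Qed.

Lemma vP_idl {a b : ob K} (X : Pk a b) gg : tgt X = gg -> vP (iP gg) X = X.
Proof. pd X; intro Hq; subst gg. change (vP (pk (id2 g)) (pk x) = pk x).
  rewrite <- pk_v, vcomp_id2l; reflexivity. Qed.
Lemma vP_idr {a b : ob K} (X : Pk a b) ff : src X = ff -> vP X (iP ff) = X.
Proof. pd X; intro Hq; subst ff. change (vP (pk x) (pk (id2 f)) = pk x).
  rewrite <- pk_v, vcomp_id2r; reflexivity. Qed.

Lemma natA {a b c : ob K} (X : Pk b c) (Y : Pk a b) g f : tgt X = g -> src Y = f ->
  hP X Y = vP (hP (iP g) Y) (hP X (iP f)).
Proof. intros; subst. rewrite <- interP by reflexivity.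
  rewrite vP_idl, vP_idr by reflexivity. reflexivity. Qed.
Lemma natB {a b c : ob K} (X : Pk b c) (Y : Pk a b) g f : tgt Y = g -> src X = f ->
  hP X Y = vP (hP X (iP g)) (hP (iP f) Y).
Proof. intros; subst. rewrite <- interP by reflexivity.
  rewrite vP_idl, vP_idr by reflexivity. reflexivity. Qed.

Lemma hPvl {a b c : ob K} (h : hom b c) (Y X : Pk a b) : tgt X = src Y ->
  hP (iP h) (vP Y X) = vP (hP (iP h) Y) (hP (iP h) X).
Proof. intros. rewrite <- interP by auto. rewrite vP_idl by reflexivity. reflexivity. Qed.
Lemma hPvr {a b c : ob K} (h : hom a b) (Y X : Pk b c) : tgt X = src Y ->
  hP (vP Y X) (iP h) = vP (hP Y (iP h)) (hP X (iP h)).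
Proof. intros. rewrite <- interP by auto. rewrite vP_idl by reflexivity. reflexivity. Qed.

End P.

Lemma hPidr2 {K : TwoCat} {a b c d : ob K} (X : Pk c d) (g : hom b c) (f : hom a b) :
  hP (hP X (iP g)) (iP f) = hP X (iP (comp1 g f)).
Proof. rewrite <- hPA, hP_id2. reflexivity. Qed.
Ltac homeq := repeat progress rewrite ?comp1A, ?comp1_id1l, ?comp1_id1r; reflexivity.
Ltac side := repeat match goal with X := _ |- _ => subst X end; repeat first [rewrite src_hP | rewrite tgt_hP | rewrite src_iP | rewrite tgt_iP
  | rewrite src_pk | rewrite tgt_pk | rewrite tgt_vP by side | rewrite src_vP by side]; homeq.
Ltac pcong := repeat first [ reflexivity | apply (f_equal2 hP) | apply (f_equal2 vP) | (apply (f_equal iP); homeq) ].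
Ltac pclose := repeat progress rewrite ?hPA, ?hP_id2, ?hPidr2; pcong.
Ltac pkify H := unfold psi_tilde, idem_cell, cell_Vveps, cell_psiv, cell_etaVv, cast2, whL, whR in H;
  apply (f_equal pk) in H;
  repeat progress rewrite ?pk_v, ?pk_h, ?pk_cast, ?pk_id in H.
Ltac pkifyG := unfold is_EM_cell_from_id, psi_tilde, idem_cell, cell_Vveps, cell_psiv, cell_etaVv, cast2, whL, whR;
  apply pk_inj;
  repeat progress rewrite ?pk_v, ?pk_h, ?pk_cast, ?pk_id.

Theorem lemma3p3 (K : TwoCat)
  (HEM : @admits_EM K) (Hsplit : @idempotents_split K)
  (k k' : ob K)
  (t : hom k k) (mu : cell (comp1 t t) t) (eta : cell (id1 k) t)
  (t' : hom k' k') (mu' : cell (comp1 t' t') t') (eta' : cell (id1 k') t')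
  (Ht : is_monad t mu eta) (Ht' : is_monad t' mu' eta')
  (J : ob K) (f : hom k J) (v : hom J k) (eps : cell (comp1 f v) (id1 J))
  (e : t = comp1 v f) (HJ : is_EM_construction mu eta f v eps e)
  (V : hom k k') (psi : cell (comp1 t' V) (comp1 V t))
  (HV : is_EMw_cell mu mu' V psi)
  (Vt : hom J k') (pi : cell (comp1 V v) Vt) (iota : cell Vt (comp1 V v))
  (Hpi_iota : vcomp pi iota = id2 Vt)
  (Hiota_pi : vcomp iota pi = idem_cell e eps eta' V psi) :
  is_EM_cell_from_id mu' eta' Vt (psi_tilde e eps V psi pi iota).
Proof.
  subst t. destruct HJ as [Hmu _]. destruct Ht' as [_ [Hu _]].
  unfold is_EMw_cell in HV. pkify HV. pkify Hmu. pkify Hu. pkify Hpi_iota. pkify Hiota_pi.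
  set (P := pk pi) in *. set (io := pk iota) in *. set (ps := pk psi) in *.
  set (ep := pk eps) in *. set (mP := pk mu) in *. set (mu2 := pk mu') in *. set (et := pk eta') in *.
  set (A := hP (iP (comp1 V v)) ep).
  set (B := hP ps (iP v)).
  set (I := hP (iP t') io).
  set (Et := hP et (iP (comp1 V v))).
  set (M := hP mu2 (iP (comp1 V v))).
  assert (Hip : vP io P = vP A (vP B Et)) by exact Hiota_pi.
  assert (FE : vP I (hP et (iP Vt)) = vP Et io).
  { unfold I, Et. rewrite <- (natA et io t' Vt) by side.
    rewrite (natB et io (comp1 V v) (id1 k')) by side. rewrite hP_id1l. reflexivity. }
  assert (FU : vP M (hP (iP t') Et) = iP (comp1 t' (comp1 V v))).
  { unfold M, Et. rewrite hPA. rewrite <- hPvr by side. rewrite Hu. rewrite hP_id2. reflexivity. }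
  assert (FU2 : vP M (hP (iP t') I) = vP I (hP mu2 (iP Vt))).
  { unfold M, I. rewrite hPA, hP_id2.
    rewrite <- (natB mu2 io) by side. rewrite <- (natA mu2 io) by side. reflexivity. }
  assert (Eeps : vP ep (hP (iP (comp1 f v)) ep) = vP ep (hP ep (iP (comp1 f v)))).
  { transitivity (hP ep ep).
    - rewrite (natB ep ep (id1 J) (comp1 f v)) by side. rewrite hP_id1r. reflexivity.
    - rewrite (natA ep ep (id1 J) (comp1 f v)) by side. rewrite hP_id1l. reflexivity. }
  assert (FA : vP A (vP B (vP (hP (iP t') A) (hP (iP t') B))) = vP A (vP B M)).
  { rewrite <- (vPA (hP (iP t') B) (hP (iP t') A) B) by side.
    replace (vP B (hP (iP t') A)) with
      (vP (hP (iP (comp1 V (comp1 v f))) (hP (iP v) ep)) (hP ps (iP (comp1 v (comp1 f v))))).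
    2:{ transitivity (hP ps (hP (iP v) ep)).
        - rewrite (natA ps (hP (iP v) ep) (comp1 V (comp1 v f)) (comp1 v (comp1 f v))) by side.
          reflexivity.
        - rewrite (natB ps (hP (iP v) ep) v (comp1 t' V)) by side. unfold B, A. pclose. }
    repeat rewrite vPA by side.
    rewrite <- (vPA _ (hP (iP (comp1 V (comp1 v f))) (hP (iP v) ep)) A) by side.
    replace (vP A (hP (iP (comp1 V (comp1 v f))) (hP (iP v) ep))) with
      (vP A (hP (hP (iP V) mP) (iP v))).
    2:{ transitivity (hP (iP (comp1 V v)) (vP ep (hP (iP (comp1 f v)) ep))).
        - rewrite Eeps. rewrite hPvl by side. unfold A. rewrite Hmu. pclose.
        - rewrite hPvl by side. unfold A. pclose. }
    rewrite vPA by side. f_equal.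
    transitivity (hP (vP (hP (iP V) mP) (vP (hP ps (iP (comp1 v f))) (hP (iP t') ps))) (iP v)).
    - rewrite !hPvr by side. unfold B. pclose.
    - rewrite HV. rewrite hPvr by side. unfold B, M. pclose. }
  split; pkifyG; fold P io ps ep mP mu2 et; fold A B I Et M.
  - repeat rewrite hPvl by side. repeat rewrite vPA by side.
    rewrite <- (vPA _ (hP (iP t') P) I) by side.
    replace (vP I (hP (iP t') P)) with (vP (hP (iP t') A) (vP (hP (iP t') B) (hP (iP t') Et))).
    2:{ unfold I. rewrite <- (hPvl t' io P) by side. rewrite Hip. rewrite !hPvl by side. reflexivity. }
    repeat rewrite vPA by side.
    rewrite <- (vPA _ (hP (iP t') B) (hP (iP t') A)) by side.
    rewrite <- (vPA _ (vP (hP (iP t') A) (hP (iP t') B)) B) by side.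
    rewrite <- (vPA _ (vP B (vP (hP (iP t') A) (hP (iP t') B))) A) by side.
    rewrite FA. repeat rewrite vPA by side.
    rewrite <- (vPA _ (hP (iP t') Et) M) by side. rewrite FU. rewrite vP_idl by side.
    rewrite <- (vPA _ (hP (iP t') B) (hP (iP t') A)) by side.
    rewrite <- (vPA _ (vP (hP (iP t') A) (hP (iP t') B)) B) by side.
    rewrite <- (vPA _ (vP B (vP (hP (iP t') A) (hP (iP t') B))) A) by side.
    rewrite FA. repeat rewrite vPA by side.
    rewrite FU2. reflexivity.
  - repeat rewrite vPA by side. rewrite FE.
    rewrite <- (vPA _ Et B) by side. rewrite <- (vPA _ (vP B Et) A) by side.
    rewrite <- Hip. rewrite vPA by side. rewrite Hpi_iota. rewrite vP_idr by side.
    exact Hpi_iota.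
Qed.
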